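(* Every pair of elements of $\mathrm{SO}(3)$ is strongly doubly reversible.
   Context: A pair $(g_1,g_2)$ in a group $G$ is strongly doubly reversible if there is $g\in G$ with $g^2=1$ such that $g g_1 g^{-1}=g_1^{-1}$ and $g g_2 g^{-1}=g_2^{-1}$. *)

(* Defs.v *)
From mathcomp Require Import all_boot all_order all_algebra.
From mathcomp Require Import reals.
Set Implicit Arguments. Unset Strict Implicit. Unset Printing Implicit Defensive.
Import Order.TTheory GRing.Theory Num.Theory.
Local Open Scope ring_scope.

Definition SO3 (R : realType) (A : 'M[R]_3) : Prop :=
  A *m A^T = 1%:M /\ \det A = 1.

Definition strongly_doubly_reversible_SO3 (R : realType) (g1 g2 : 'M[R]_3) : Prop :=
  exists g : 'M[R]_3, SO3 g /\ g *m g = 1%:M /\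
    g *m g1 *m invmx g = invmx g1 /\ g *m g2 *m invmx g = invmx g2.

(* Main.v *)
Require Import Defs.
From mathcomp Require Import all_boot all_order all_algebra.
From mathcomp Require Import reals.
From mathcomp Require Import ring lra.
Set Implicit Arguments. Unset Strict Implicit. Unset Printing Implicit Defensive.
Import Order.TTheory GRing.Theory Num.Theory.
Local Open Scope ring_scope.


Definition i0 : 'I_3 := @Ordinal 3 0 isT.
Definition i1 : 'I_3 := @Ordinal 3 1 isT.
Definition i2 : 'I_3 := @Ordinal 3 2 isT.

Lemma ord3_cases (P : 'I_3 -> Prop) : P i0 -> P i1 -> P i2 -> forall i, P i.
Proof.
move=> H0 H1 H2 [[|[|[|k]]] Hk] //.
- by rewrite (_ : Ordinal Hk = i0) //; apply: val_inj.
- by rewrite (_ : Ordinal Hk = i1) //; apply: val_inj.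
- by rewrite (_ : Ordinal Hk = i2) //; apply: val_inj.
Qed.

Lemma ordE : ((i0 == i0) = true) * ((i1 == i1) = true) * ((i2 == i2) = true) *
  ((i0 == i1) = false) * ((i0 == i2) = false) * ((i1 == i0) = false) *
  ((i1 == i2) = false) * ((i2 == i0) = false) * ((i2 == i1) = false).
Proof. by []. Qed.

Section Coord.
Variable F : comNzRingType.

Lemma sum3 (f : 'I_3 -> F) : \sum_(k < 3) f k = f i0 + f i1 + f i2.
Proof.
rewrite !big_ord_recl big_ord0 addr0 addrA.
congr (f _ + f _ + f _); exact: val_inj.
Qed.

Lemma mul3E m p (A : 'M[F]_(m,3)) (B : 'M[F]_(3,p)) i j :
  (A *m B) i j = A i i0 * B i0 j + A i i1 * B i1 j + A i i2 * B i2 j.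
Proof. by rewrite mxE sum3. Qed.

Lemma det_mx33 (A : 'M[F]_3) : \det A =
  A i0 i0 * A i1 i1 * A i2 i2 + A i0 i1 * A i1 i2 * A i2 i0 + A i0 i2 * A i1 i0 * A i2 i1
  - A i0 i2 * A i1 i1 * A i2 i0 - A i0 i0 * A i1 i2 * A i2 i1 - A i0 i1 * A i1 i0 * A i2 i2.
Proof.
pose a (i j : nat) := A (inord i) (inord j).
have Ae : forall x y : 'I_3, A x y = a x y by move=> x y; rewrite /a !inord_val.
rewrite (expand_det_row _ i0) !big_ord_recl big_ord0 /cofactor.
rewrite !(expand_det_row _ ord0) !big_ord_recl !big_ord0 /cofactor !det_mx11 !mxE !Ae /=.
rewrite /bump. cbv [leq subn subn_rec addn addn_rec Nat.add Nat.sub eq_op nat_of_bool]. simpl.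
ring.
Qed.

Definition tr3 (A : 'M[F]_3) := A i0 i0 + A i1 i1 + A i2 i2.
Definition e2 (A : 'M[F]_3) :=
  (A i1 i1 * A i2 i2 - A i1 i2 * A i2 i1) + (A i0 i0 * A i2 i2 - A i0 i2 * A i2 i0)
  + (A i0 i0 * A i1 i1 - A i0 i1 * A i1 i0).

Lemma det_shift (A : 'M[F]_3) c :
  \det (A + c%:M) = c ^+ 3 + tr3 A * c ^+ 2 + e2 A * c + \det A.
Proof. rewrite !det_mx33 !mxE /tr3 /e2 !ordE /=; ring. Qed.

Lemma adj_diag (A : 'M[F]_3) : tr3 (\adj A) = e2 A.
Proof.
pose a (i j : nat) := A (inord i) (inord j).
have Ae : forall x y : 'I_3, A x y = a x y by move=> x y; rewrite /a !inord_val.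
rewrite /tr3 /e2 !mxE /cofactor.
rewrite !(expand_det_row _ ord0) !big_ord_recl !big_ord0 /cofactor !det_mx11 !mxE !Ae /=.
rewrite /bump. cbv [leq subn subn_rec addn addn_rec Nat.add Nat.sub eq_op nat_of_bool]. simpl.
ring.
Qed.
End Coord.

Section K.
Variable F : realFieldType.

Lemma SO3_adj (A : 'M[F]_3) : A *m A^T = 1%:M -> \det A = 1 -> \adj A = A^T.
Proof.
move=> HO HD.
by rewrite -[\adj A]mulmx1 -HO mulmxA mul_adj_mx HD mul1mx.
Qed.

Lemma SO3_e2 (A : 'M[F]_3) : A *m A^T = 1%:M -> \det A = 1 -> e2 A = tr3 A.
Proof.
move=> HO HD; rewrite -adj_diag SO3_adj // /tr3 !mxE //.
Qed.

Lemma key (B : 'M[F]_3) : B *m B^T = 1%:M -> \det B = 1 -> \det (B + 1%:M) = 0 -> B^T = B.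
Proof.
move=> HO HD HB.
have He := SO3_e2 HO HD.
have := det_shift B 1; rewrite HB HD He expr1n !mulr1 => Ht.
have Ht1 : tr3 B = -1 by lra.
have Hsq : forall i, (B *m B^T) i i = 1 by move=> i; rewrite HO mxE eqxx.
have S0 := Hsq i0; have S1 := Hsq i1; have S2 := Hsq i2.
rewrite !mul3E !mxE in S0 S1 S2.
have HS : (B i0 i1 - B i1 i0) ^+ 2 + (B i0 i2 - B i2 i0) ^+ 2 + (B i1 i2 - B i2 i1) ^+ 2
   = (B i0 i0 * B i0 i0 + B i0 i1 * B i0 i1 + B i0 i2 * B i0 i2)
   + (B i1 i0 * B i1 i0 + B i1 i1 * B i1 i1 + B i1 i2 * B i1 i2)
   + (B i2 i0 * B i2 i0 + B i2 i1 * B i2 i1 + B i2 i2 * B i2 i2)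
   - (tr3 B) ^+ 2 + 2 * e2 B.
  by rewrite /tr3 /e2; ring.
rewrite S0 S1 S2 He Ht1 in HS.
have HS0 : (B i0 i1 - B i1 i0) ^+ 2 + (B i0 i2 - B i2 i0) ^+ 2 + (B i1 i2 - B i2 i1) ^+ 2 = 0
  by rewrite HS; ring.
move/eqP: HS0; rewrite paddr_eq0 ?addr_ge0 ?sqr_ge0 // => /andP [].
rewrite paddr_eq0 ?sqr_ge0 // => /andP [].
rewrite !sqrf_eq0 !subr_eq0 => /eqP E01 /eqP E02 /eqP E12.
apply/matrixP; apply: ord3_cases; apply: ord3_cases; rewrite mxE //.
Qed.
End K.

Section M.
Variable F : realFieldType.

Lemma inv_orth (A : 'M[F]_3) : A *m A^T = 1%:M -> invmx A = A^T.
Proof.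
move=> HO; have [U _] := mulmx1_unit HO.
by rewrite -[invmx A]mulmx1 -HO mulmxA mulVmx // mul1mx.
Qed.

Lemma fixvec (A : 'M[F]_3) : A *m A^T = 1%:M -> \det A = 1 ->
  exists2 v : 'rV[F]_3, v != 0 & v *m A = v.
Proof.
move=> HO HD.
have : \det (A + (-1)%:M) == 0.
  by rewrite det_shift HD SO3_e2 //; apply/eqP; ring.
case/det0P => v nz Hv; exists v => //.
apply/eqP; rewrite -subr_eq0 -[X in _ - X]mulmx1 -mulmxBr -Hv; apply/eqP; congr (_ *m (_ + _)); apply/matrixP => i j; by rewrite !mxE mulNrn.
Qed.

Lemma perpvec (v1 v2 : 'rV[F]_3) :
  exists2 n : 'rV[F]_3, n != 0 & (v1 *m n^T = 0 /\ v2 *m n^T = 0).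
Proof.
pose M : 'M[F]_3 := \matrix_(i, j) (if i == i0 then v1 0 j else if i == i1 then v2 0 j else 0).
have : \det M^T == 0.
  by rewrite det_tr det_mx33 !mxE !ordE /=; apply/eqP; ring.
case/det0P => n nz Hn; exists n => //.
have E0 := congr1 (fun X : 'M[F]_(1,3) => X 0 i0) Hn; have E1 := congr1 (fun X : 'M[F]_(1,3) => X 0 i1) Hn.
rewrite /= !mul3E !mxE !ordE /= in E0 E1.
split; apply/matrixP => i j; rewrite !ord1 mul3E !mxE.
- by rewrite -E0; ring.
- by rewrite -E1; ring.
Qed.

Lemma main_conj (A g : 'M[F]_3) (v : 'rV[F]_3) :
  A *m A^T = 1%:M -> \det A = 1 -> v != 0 -> v *m A = v ->
  g^T = g -> g *m g = 1%:M -> \det g = 1 -> v *m g = - v ->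
  g *m A *m invmx g = invmx A.
Proof.
move=> HO HD nz Hv gT gg dg vg.
have gO : g *m g^T = 1%:M by rewrite gT.
rewrite inv_orth // inv_orth // gT.
pose B := g *m A.
have BO : B *m B^T = 1%:M.
  by rewrite /B trmx_mul mulmxA -(mulmxA g) HO mulmx1.
have BD : \det B = 1 by rewrite det_mulmx dg HD mulr1.
have BB : \det (B + 1%:M) = 0.
  apply/eqP/det0P; exists v => //.
  by rewrite mulmxDr mulmx1 /B mulmxA vg mulNmx Hv addNr.
have := key BO BD BB; rewrite /B trmx_mul gT => E.
by rewrite -E -mulmxA gg mulmx1.
Qed.
End M.

Section G.
Variable F : realFieldType.

Lemma gmat (n : 'rV[F]_3) : n != 0 -> exists g : 'M[F]_3,
  [/\ g^T = g, g *m g = 1%:M, \det g = 1 & forall v : 'rV[F]_3, v *m n^T = 0 -> v *m g = - v].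
Proof.
move=> nz.
pose s := (n *m n^T) 0 0.
have sE : s = n 0 i0 * n 0 i0 + n 0 i1 * n 0 i1 + n 0 i2 * n 0 i2 by rewrite /s mul3E !mxE.
have s0 : s != 0.
  apply: contra nz => /eqP; rewrite sE -!expr2 => /eqP.
  rewrite paddr_eq0 ?addr_ge0 ?sqr_ge0 // => /andP [].
  rewrite paddr_eq0 ?sqr_ge0 // !sqrf_eq0 => /andP [/eqP H0 /eqP H1] /eqP H2.
  apply/eqP/matrixP => i j; rewrite ord1 mxE; move: j; apply: ord3_cases => //.
pose c := 2 / s.
pose N := n^T *m n.
have NN : N *m N = s *: N.
  by rewrite /N mulmxA -(mulmxA n^T) [n *m n^T]mx11_scalar mul_mx_scalar -scalemxAl.
have NT : N^T = N by rewrite /N trmx_mul trmxK.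
pose g := c *: N - 1%:M.
exists g; split.
- by rewrite /g linearB /= linearZ /= NT trmx1.
- rewrite /g mulmxBl mulmxBr !mulmxBr !mulmx1 mul1mx -scalemxAl -scalemxAr NN scalerA.
  rewrite scalerA (_ : c * c * s = c + c); last by rewrite /c; field.
  by rewrite scalerDl opprB addrA addrK addrC addKr.
- have NE : forall i j, N i j = n 0 i * n 0 j by move=> i j; rewrite /N mxE big_ord1 !mxE.
  clearbody N.
  rewrite det_mx33 /g !mxE !NE !ordE /= /c sE; field.
  by rewrite -sE.
- move=> v Hv; rewrite /g mulmxBr mulmx1 -scalemxAr /N mulmxA Hv mul0mx scaler0 sub0r //.
Qed.
End G.

Theorem corollary3p4 (R : realType) (g1 g2 : 'M[R]_3) :
  SO3 g1 -> SO3 g2 -> strongly_doubly_reversible_SO3 g1 g2.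
Proof.
move=> [O1 D1] [O2 D2].
have [v1 nz1 H1] := fixvec O1 D1.
have [v2 nz2 H2] := fixvec O2 D2.
have [n nzn [P1 P2]] := perpvec v1 v2.
have [g [gT gg dg vg]] := gmat nzn.
exists g; split; first by split; [rewrite gT | exact: dg].
split; first exact: gg.
split; [exact: (main_conj O1 D1 nz1 H1 gT gg dg (vg _ P1)) | exact: (main_conj O2 D2 nz2 H2 gT gg dg (vg _ P2))].
Qed.
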